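(* Let $R \xrightarrow{\tau} A \xrightarrow{\lambda} C \xrightarrow{g_C} B$ be ring morphisms and put $g := g_C\circ\lambda : A \to B$. Regard $C$ as an $R$-algebra via $\lambda\circ\tau$. Then $A^*_{B,R} \subseteq C^*_{B,R}$, where $A^*_{B,R}$ is the Lipschitz saturation of $A$ in $B$ relative to $R \xrightarrow{\tau} A \xrightarrow{g} B$ and $C^*_{B,R}$ is the Lipschitz saturation of $C$ in $B$ relative to $R \xrightarrow{\lambda\circ\tau} C \xrightarrow{g_C} B$.
   Context: All rings are commutative with identity. For a sequence of ring morphisms $R \to A' \xrightarrow{h} B$, let $\varphi: B\otimes_R B \to B \otimes_{A'} B$ be the canonical $R$-algebra morphism $x\otimes_R y \mapsto x \otimes_{A'} y$, and let $\Delta: B \to B\otimes_R B$, $\Delta(b) = b\otimes_R 1 - 1 \otimes_R b$. The Lipschitz saturation of $A'$ in $B$ relative to $R\to A'\to B$ is $(A')^*_{B,R} := \{x \in B \mid \Delta(x) \in \overline{\ker\varphi}\}$, where for an ideal $I$ of a ring $S$, $\overline{I}$ denotes the integral closure of $I$: the set of $u\in S$ satisfying $u^n + a_1u^{n-1}+\cdots+a_n = 0$ for some $n\ge 1$ and $a_i \in I^i$. *)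

(* Defs.v *)
(* Commutative rings with identity (zero ring allowed):
   comPzRingType; ring morphisms: {rmorphism _ -> _}. *)
From HB Require Import structures.
From mathcomp Require Import all_boot all_order all_algebra.
Set Implicit Arguments. Unset Strict Implicit. Unset Printing Implicit Defensive.
Import GRing.Theory.
Local Open Scope ring_scope.

(* The tensor product B (x)_{A'} B of an A'-algebra B (structure map
   h : A' -> B), given by its universal property: it is the pushout of
   h along h in the category of commutative rings, i.e. a ring T with
   i1 (b) = b (x) 1 and i2 (b) = 1 (x) b. *)
Record tensor_data (A' B : comPzRingType) (h : {rmorphism A' -> B}) := TensorData {
  td_T :> comPzRingType;
  td_i1 : {rmorphism B -> td_T};
  td_i2 : {rmorphism B -> td_T};
  td_comm : forall a, td_i1 (h a) = td_i2 (h a);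
  td_univ : forall (S : comPzRingType) (u1 u2 : {rmorphism B -> S}),
    (forall a, u1 (h a) = u2 (h a)) ->
    exists w : {rmorphism td_T -> S},
      [/\ (forall b, w (td_i1 b) = u1 b), (forall b, w (td_i2 b) = u2 b) &
          forall w' : {rmorphism td_T -> S},
            (forall b, w' (td_i1 b) = u1 b) -> (forall b, w' (td_i2 b) = u2 b) ->
            forall t, w' t = w t]
}.

Fixpoint ideal_pow (S : comPzRingType) (I : S -> Prop) (k : nat) (x : S) : Prop :=
  match k with
  | 0 => True
  | k'.+1 => exists s : seq (S * S),
      (forall p, p \in s -> I p.1 /\ ideal_pow I k' p.2) /\
      x = \sum_(p <- s) p.1 * p.2
  end.

Definition int_closure (S : comPzRingType) (I : S -> Prop) (u : S) : Prop :=
  exists n : nat, (0 < n)%N /\ exists a : nat -> S,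
    (forall i, (1 <= i <= n)%N -> ideal_pow I i (a i)) /\
    u ^+ n + \sum_(1 <= i < n.+1) a i * u ^+ (n - i) = 0.

(* Lipschitz saturation of A' in B relative to R -> A' -h-> B, where
   fR : R -> B is the composite structure map, TR = B (x)_R B and
   TA = B (x)_{A'} B.  phi is the canonical map x (x)_R y |-> x (x)_{A'} y
   (i.e. the unique ring morphism with phi o i1 = i1, phi o i2 = i2). *)
Definition lipschitz_saturation (R A' B : comPzRingType)
  (fR : {rmorphism R -> B}) (h : {rmorphism A' -> B})
  (TR : tensor_data fR) (TA : tensor_data h) (x : B) : Prop :=
  forall phi : {rmorphism td_T TR -> td_T TA},
    (forall b, phi (td_i1 TR b) = td_i1 TA b) ->
    (forall b, phi (td_i2 TR b) = td_i2 TA b) ->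
    int_closure (fun t => phi t = 0) (td_i1 TR x - td_i2 TR x).

(* Main.v *)
Require Import Defs.
From HB Require Import structures.
From mathcomp Require Import all_boot all_order all_algebra.
Local Open Scope ring_scope.

Lemma ideal_pow_mono (S : comPzRingType) (I J : S -> Prop) :
  (forall t, I t -> J t) -> forall k x, ideal_pow I k x -> ideal_pow J k x.
Proof.
move=> IJ; elim=> [//|k IH] x /= [s [Hs ->]].
exists s; split=> // p /Hs [H1 H2]; split; [exact: IJ | exact: IH].
Qed.

Theorem mainTheorem2 (R A C B : comPzRingType)
  (tau : {rmorphism R -> A}) (lambda : {rmorphism A -> C})
  (gC : {rmorphism C -> B}) (g : {rmorphism A -> B})
  (fR : {rmorphism R -> B})
  (hg : forall a, g a = gC (lambda a))
  (hfR : forall r, fR r = g (tau r))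
  (TR : tensor_data fR) (TA : tensor_data g) (TC : tensor_data gC) :
  forall x : B, lipschitz_saturation TR TA x -> lipschitz_saturation TR TC x.
Proof.
move=> x Hx phi Hp1 Hp2.
have [phi' [Hq1 Hq2 _]] := td_univ TR
  (fun r => etrans (congr1 _ (hfR r)) (etrans (td_comm TA (tau r)) (congr1 _ (esym (hfR r))))).
have [psi [Hs1 Hs2 _]] := td_univ TA
  (fun a => etrans (congr1 _ (hg a)) (etrans (td_comm TC (lambda a)) (congr1 _ (esym (hg a))))).
have HC : forall r, td_i1 TC (fR r) = td_i2 TC (fR r).
  move=> r; rewrite hfR hg; exact: td_comm.
have [w [_ _ Hu]] := td_univ TR HC.
have E : forall t, phi t = psi (phi' t).
  move=> t; rewrite (Hu phi Hp1 Hp2 t).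
  have := Hu (psi \o phi')%FUN.
  move=> H; rewrite -H //= => b; by rewrite ?Hq1 ?Hq2 ?Hs1 ?Hs2.
have [n [Hn [a [Ha Heq]]]] := Hx phi' Hq1 Hq2.
have HIJ : forall t, phi' t = 0 -> phi t = 0 by move=> t Ht; rewrite E Ht GRing.rmorph0.
exists n; split=> //; exists a; split=> // i Hi.
exact: (@ideal_pow_mono _ _ _ HIJ _ _ (Ha i Hi)).
Qed.
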